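(* Let $\alpha,\beta,\gamma,x\in\mathbb{N}_0$ with $(\alpha,\beta,\gamma,x)\neq(0,0,0,0)$, let $\lambda$ be a nonnegative integer and $n$ a nonnegative integer. Then $$A^{\lambda,x}_n(\alpha,\beta,\gamma)=\sum_{k=0}^{n}\binom{k+\lambda-1}{k}\sum_{i=0}^{n}\binom{n}{i}x^k(-1)^{k+i}\beta^k k!\,S(i,k,\alpha,-\beta,0)\,(\gamma|-\alpha)_{n-i}.$$
   Context: For a number $t$ and $\alpha$, the generalised factorial is $(t|\alpha)_n=\prod_{j=0}^{n-1}(t-j\alpha)$ for $n\ge 1$ and $(t|\alpha)_0=1$. For parameters $\alpha,\beta,\gamma$, the generalised Stirling numbers $S(n,k,\alpha,\beta,\gamma)$ ($0\le k\le n$) are defined by the polynomial identity $(t|\alpha)_n=\sum_{k=0}^{n}S(n,k,\alpha,\beta,\gamma)\,(t-\gamma|\beta)_k$ in the variable $t$, and $S(i,k,\alpha,\beta,\gamma)=0$ for $k>i$. For a nonnegative integer $\lambda$ put $\binom{k+\lambda-1}{k}=\lambda(\lambda+1)\cdots(\lambda+k-1)/k!$ (equal to $1$ for $k=0$). Define $$A^{\lambda,x}_n(\alpha,\beta,\gamma)=\sum_{k=0}^{n}\binom{k+\lambda-1}{k}(-1)^{n+k}\beta^k k!\,S(n,k,\alpha,-\beta,-\gamma)\,x^k .$$ *)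

(* Defs.v *)
From mathcomp Require Import all_boot all_order all_algebra.
Set Implicit Arguments. Unset Strict Implicit. Unset Printing Implicit Defensive.
Import Order.TTheory GRing.Theory Num.Theory.
Local Open Scope ring_scope.

Definition gfact (R : comRingType) (t a : R) (n : nat) : R :=
  \prod_(j < n) (t - j%:R * a).

Definition gfact_poly (R : comRingType) (c b : R) (k : nat) : {poly R} :=
  \prod_(j < k) ('X - c%:P - (j%:R * b)%:P).

Definition is_gen_stirling (R : comRingType) (S : nat -> nat -> R) (a b c : R) : Prop :=
  (forall n : nat,
     \prod_(j < n) ('X - (j%:R * a)%:P)
     = \sum_(k < n.+1) S n k *: gfact_poly c b k)
  /\ (forall i k : nat, (i < k)%N -> S i k = 0).

(* binom(k+lambda-1, k) = lambda(lambda+1)...(lambda+k-1)/k!, equal to 1 for k = 0 *)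
Definition multichoose (lam k : nat) : nat := 'C((k + lam).-1, k).

(* A^{lambda,x}_n(alpha,beta,gamma), where S n k stands for S(n,k,alpha,-beta,-gamma) *)
Definition A_poly (S : nat -> nat -> int) (lam : nat) (x beta : int) (n : nat) : int :=
  \sum_(k < n.+1) (multichoose lam k)%:R * (-1) ^+ (n + k) * beta ^+ k
                  * (k`!)%:R * S n k * x ^+ k.

(* Main.v *)
Require Import Defs.
From mathcomp Require Import all_boot all_order all_algebra.
From mathcomp Require Import ring zify.
Import Order.TTheory GRing.Theory Num.Theory.
Local Open Scope ring_scope.

Lemma gfactS (R : comRingType) (t a : R) m : gfact t a m.+1 = gfact t a m * (t - m%:R * a).
Proof. by rewrite /gfact big_ord_recr. Qed.

Lemma gvand (R : comRingType) (P Q a : R) n :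
  \prod_(j < n) (P + Q - j%:R * a)
  = \sum_(i < n.+1) 'C(n, i)%:R * gfact P a i * gfact Q a (n - i).
Proof.
elim: n => [|n IH].
  by rewrite big_ord0 big_ord1 /gfact !big_ord0 /= mulr1 mul1r.
rewrite big_ord_recr /= IH mulr_suml.
transitivity (\sum_(i < n.+1) ('C(n,i)%:R * gfact P a i.+1 * gfact Q a (n-i)
   + 'C(n,i)%:R * gfact P a i * gfact Q a (n.+1 - i))).
  apply: eq_bigr => i _.
  have hi : (i <= n)%N by rewrite -ltnS.
  rewrite subSn // !gfactS.
  have -> : P + Q - n%:R * a = (P - i%:R * a) + (Q - (n - i)%:R * a).
    by rewrite natrB //; ring.
  ring.
rewrite big_split /= [in RHS]big_ord_recl /=.
have -> : \sum_(i < n.+1) 'C(n.+1, bump 0 i)%:R * gfact P a (bump 0 i) * gfact Q a (n.+1 - bump 0 i)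
  = \sum_(i < n.+1) ('C(n, i.+1)%:R * gfact P a i.+1 * gfact Q a (n - i) + 'C(n, i)%:R * gfact P a i.+1 * gfact Q a (n - i)).
  by apply: eq_bigr => i _; rewrite /bump /= add1n binS natrD !mulrDl subSS.
rewrite big_split /= addrC addrA; congr (_ + _).
rewrite big_ord_recl /= [in RHS]big_ord_recr /= (bin_small (ltnSn n)) !mul0r addr0.
rewrite !bin0 subn0 addrC; congr (_ + _).
Qed.

Lemma coef_uniq (R : nzRingType) (B : nat -> {poly R})
  (hB : forall k, B k \is monic /\ size (B k) = k.+1) m (e : nat -> R) :
  \sum_(k < m) e k *: B k = 0 -> forall k, (k < m)%N -> e k = 0.
Proof.
elim: m => [|m IH] h k hk; first by [].
rewrite big_ord_recr /= in h.
have em : e m = 0.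
  have := congr1 (fun p : {poly R} => p`_m) h.
  rewrite coefD coef_sum coefZ coef0 big1 ?add0r.
    have [mon sz] := hB m.
    have -> : (B m)`_m = 1 by have := monicP mon; rewrite /lead_coef sz.
    by rewrite mulr1.
  move=> i _; rewrite coefZ nth_default ?mulr0 //.
  by have [_ ->] := hB i; exact: ltn_ord i.
rewrite em scale0r addr0 in h.
rewrite ltnS leq_eqVlt in hk; case/orP: hk => [/eqP->|hk]; first exact em.
exact: IH h k hk.
Qed.

Lemma gfp_props (c b : int) k :
  gfact_poly c b k \is monic /\ size (gfact_poly c b k) = k.+1.
Proof.
elim: k => [|k [mk sk]].
  by rewrite /gfact_poly big_ord0 monic1 size_poly1.
have -> : gfact_poly c b k.+1 = gfact_poly c b k * ('X - (c + k%:R * b)%:P).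
  by rewrite /gfact_poly big_ord_recr /= polyCD opprD addrA.
split; first by rewrite monicMl // monicXsubC.
rewrite size_monicM //; last by rewrite polyXsubC_eq0.
by rewrite sk size_XsubC addn2.
Qed.

Lemma key (a b g : int) (S1 S2 : nat -> nat -> int)
  (hS1 : is_gen_stirling S1 a (-b) (-g)) (hS2 : is_gen_stirling S2 a (-b) 0)
  n k : (k < n.+1)%N ->
  S1 n k = \sum_(i < n.+1) 'C(n, i)%:R * S2 i k * gfact (-g) a (n - i).
Proof.
move: k.
pose Rk k := \sum_(i < n.+1) 'C(n, i)%:R * S2 i k * gfact (-g) a (n - i).
have E : \prod_(j < n) ('X - (j%:R * a)%:P)
    = \sum_(k < n.+1) Rk k *: gfact_poly (-g) (-b) k.
  have -> : \prod_(j < n) ('X - (j%:R * a)%:P)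
      = \prod_(j < n) (('X + g%:P) + (-g)%:P - j%:R * a%:P).
    apply: eq_bigr => j _; rewrite rmorphM /= polyC_natr polyCN; ring.
  rewrite gvand.
  have HP : forall i : 'I_n.+1, gfact ('X + g%:P) a%:P i
      = \sum_(k < n.+1) S2 i k *: gfact_poly (-g) (-b) k.
    move=> i.
    have := congr1 (comp_poly ('X + g%:P)) (hS2.1 i).
    rewrite rmorph_prod linear_sum /=.
    move=> h.
    have -> : gfact ('X + g%:P) a%:P i = \prod_(j < i) (('X - (j%:R * a)%:P) \Po ('X + g%:P)).
      apply: eq_bigr => j _.
      by rewrite comp_polyB comp_polyX comp_polyC rmorphM /= polyC_natr.
    rewrite h (big_ord_widen n.+1 (fun k => S2 i k *: gfact_poly 0 (-b) k \Po ('X + g%:P)) (ltn_ord i)).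
    rewrite big_mkcond /=; apply: eq_bigr => k _.
    case: ifP => hki.
      rewrite linearZ /=; congr (_ *: _).
      rewrite /gfact_poly rmorph_prod; apply: eq_bigr => j _.
      rewrite /= !comp_polyB comp_polyX !comp_polyC polyCN; ring.
    by rewrite hS2.2 ?scale0r // ltnNge -ltnS hki.
  have HQ : forall i : 'I_n.+1, gfact (-g)%:P a%:P (n - i) = (gfact (-g) a (n - i))%:P.
    move=> i; rewrite /gfact rmorph_prod; apply: eq_bigr => j _.
    by rewrite rmorphB rmorphM /= polyC_natr.
  transitivity (\sum_(i < n.+1) \sum_(k < n.+1)
      ('C(n, i)%:R * S2 i k * gfact (-g) a (n - i)) *: gfact_poly (-g) (-b) k).
    apply: eq_bigr => i _.
    rewrite HP HQ mulrC mulrA.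
    have -> : (gfact (-g) a (n - i))%:P * 'C(n, i)%:R
        = ('C(n, i)%:R * gfact (-g) a (n - i))%:P.
      by rewrite rmorphM /= polyC_natr mulrC.
    rewrite mul_polyC scaler_sumr; apply: eq_bigr => k _.
    by rewrite scalerA mulrAC.
  rewrite exchange_big /=; apply: eq_bigr => k _.
  by rewrite scaler_suml.
move=> k hk.
have H0 : \sum_(k < n.+1) (S1 n k - Rk k) *: gfact_poly (-g) (-b) k = 0.
  under eq_bigr do rewrite scalerBl.
  by rewrite sumrB -E -(hS1.1 n) subrr.
have := @coef_uniq _ _ (fun k => gfp_props (-g) (-b) k) _ (fun k => S1 n k - Rk k) H0 k hk.
by move/eqP; rewrite subr_eq0 => /eqP.
Qed.

Lemma sign_comb n k i : (i <= n)%N ->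
  (-1) ^+ (n + k) * (-1) ^+ (n - i) = (-1) ^+ (k + i) :> int.
Proof.
move=> hi; rewrite -exprD.
have -> : (n + k + (n - i) = (k + i) + (n - i) * 2)%N by lia.
by rewrite exprD mulnC exprM sqrrN !expr1n mulr1.
Qed.

Lemma gfact_neg (g a : int) m : gfact (-g) a m = (-1) ^+ m * gfact g (-a) m.
Proof.
elim: m => [|m IH]; first by rewrite /gfact !big_ord0 mul1r.
rewrite !gfactS IH exprS; ring.
Qed.

Theorem theorem7 (alpha beta gamma x lam n : nat)
  (S1 S2 : nat -> nat -> int)
  (hnz : (alpha, beta, gamma, x) <> (0%N, 0%N, 0%N, 0%N))
  (hS1 : is_gen_stirling S1 (alpha%:R) (- beta%:R) (- gamma%:R))
  (hS2 : is_gen_stirling S2 (alpha%:R) (- beta%:R) 0) :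
  A_poly S1 lam x%:R beta%:R n
  = \sum_(k < n.+1) (multichoose lam k)%:R *
      \sum_(i < n.+1) ('C(n, i))%:R * (x%:R) ^+ k * (-1) ^+ (k + i)
          * (beta%:R) ^+ k * (k`!)%:R * S2 i k
          * gfact (gamma%:R) (- alpha%:R) (n - i).
Proof.
rewrite /A_poly; apply: eq_bigr => k _.
rewrite (@key _ _ _ _ _ hS1 hS2 n k (ltn_ord k)).
set s := \sum_(i < n.+1) _.
set c := (multichoose lam k)%:R.
have -> : c * (-1) ^+ (n + k) * beta%:R ^+ k * (k`!)%:R * s * x%:R ^+ k
  = c * ((-1) ^+ (n + k) * beta%:R ^+ k * (k`!)%:R * x%:R ^+ k * s) by ring.
congr (_ * _); rewrite /s mulr_sumr; apply: eq_bigr => i _.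
have hi : (i <= n)%N by rewrite -ltnS.
rewrite gfact_neg -(@sign_comb n k i hi); ring.
Qed.
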